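(* Let $L$ be a multisorted algebra in the positive quantifier-free signature. Then $L$ satisfies axioms (0), (1), (2), (3), (4) if and only if $L$ is isomorphic to a subalgebra of the positive quantifier-free algebra $A(W)$ of some set $W$.
   Context: Throughout, the Boolean prime ideal theorem is assumed. Signature. There is a sort $n$ for each natural number $n\ge 0$. For every function $\alpha\colon\{1,\dots,n\}\to\{1,\dots,k\}$ there is a unary function symbol (''substitution'') $\alpha\colon n\to k$ (argument of sort $n$, value of sort $k$). For each sort $n$ there are constants $0^n,1^n$ of sort $n$ and binary operations $\vee^n,\wedge^n$ on sort $n$ (superscripts usually omitted). This is the positive quantifier-free signature. If $\alpha\colon k\to n$ and $\beta\colon n\to m$ are substitutions, $\beta\circ\alpha\colon k\to m$ denotes the substitution symbol of the composite function $\{1,\dots,k\}\to\{1,\dots,m\}$, while $\beta(\alpha(r))$ denotes composition of the operations inside an algebra. $\mathrm{id}\colon n\to n$ is the identity substitution. Concrete algebras. For a set $W$ and a substitution $\alpha\colon\{1,\dots,n\}\to\{1,\dots,k\}$ put $\alpha^{\mathrm{tuple}}\colon W^k\to W^n$, $\alpha^{\mathrm{tuple}}(x_1,\dots,x_k)=(x_{\alpha(1)},\dots,x_{\alpha(n)})$, and $\alpha^{\mathrm{relation}}\colon\mathcal P(W^n)\to\mathcal P(W^k)$, $\alpha^{\mathrm{relation}}(r)=\{\bar x\in W^k:\alpha^{\mathrm{tuple}}(\bar x)\in r\}$. The positive quantifier-free algebra $A(W)$ has sort $n$ interpreted as $\mathcal P(W^n)$, each substitution $\alpha$ interpreted as $\alpha^{\mathrm{relation}}$,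 and $0,1,\vee,\wedge$ on sort $n$ interpreted as $\emptyset, W^n,\cup,\cap$. (Note $W^0$ has exactly one element, so sort $0$ of $A(W)$ has two elements.) Subalgebras and morphisms are in the multisorted sense. Partitioning cylindrifications: given $k_1,\dots,k_m\ge 0$ and $n=k_1+\dots+k_m$, the substitutions $c_i\colon k_i\to n$ given by $c_i(l)=l+\sum_{j<i}k_j$ (so $c_i^{\mathrm{tuple}}(\bar x_1\cdots\bar x_m)=\bar x_i$). In an algebra, $x\le y$ (also written $y\ge x$) means $x=x\wedge y$. Axioms: (0) For all partitioning cylindrifications $c_1,\dots,c_m$ with $c_i\colon k_i\to k_1+\dots+k_m$, and all $r_i,s_i$ of sort $k_i$: if $\bigvee_{i=1}^m c_i(s_i)\ge\bigwedge_{i=1}^m c_i(r_i)$ then $s_i\ge r_i$ for some $i$. This includes the case $m=0$ (empty join $=0$, empty meet $=1$ in sort $0$, empty disjunction false), i.e. $0\ge 1$ fails in sort $0$. (1) In each sort, $0,1,\vee,\wedge$ form a bounded distributive lattice. (2) Every substitution preserves $0,1,\vee,\wedge$ (e.g. $\alpha(r\wedge s)=\alpha(r)\wedge\alpha(s)$). (3) For substitutions $\alpha\colon k\to n$, $\beta\colon n\to m$ and all $r$ of sort $k$: $(\beta\circ\alpha)(r)=\beta(\alpha(r))$. (4) For all $r$ of sort $n$: $\mathrm{id}(r)=r$. *)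

(* Defs.v *)
From mathcomp Require Import all_boot.
Set Implicit Arguments. Unset Strict Implicit. Unset Printing Implicit Defensive.

(* Sort n indexed by n : nat; a substitution alpha : {1..n} -> {1..k} is
   represented (0-indexed) by a finite function alpha : {ffun 'I_n -> 'I_k}. *)
Record pqf_alg := PqfAlg {
  car  : nat -> Type;
  sub  : forall n k : nat, {ffun 'I_n -> 'I_k} -> car n -> car k;
  zero : forall n, car n;
  one  : forall n, car n;
  join : forall n, car n -> car n -> car n;
  meet : forall n, car n -> car n -> car n
}.
Arguments sub L {n k} a x : rename.
Arguments zero L {n} : rename.
Arguments one L {n} : rename.
Arguments join L {n} x y : rename.
Arguments meet L {n} x y : rename.

Definition le (L : pqf_alg) n (x y : car L n) : Prop := x = meet L x y.

Definition comp_sub n k m (b : {ffun 'I_k -> 'I_m}) (a : {ffun 'I_n -> 'I_k})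
  : {ffun 'I_n -> 'I_m} := [ffun i => b (a i)].
Definition id_sub n : {ffun 'I_n -> 'I_n} := [ffun i => i].

Definition offset m (ks : 'I_m -> nat) (i : 'I_m) : nat :=
  \sum_(j < m | j < i) ks j.

Lemma cyl_bound m (ks : 'I_m -> nat) (i : 'I_m) (l : 'I_(ks i)) :
  l + offset ks i < \sum_(j < m) ks j.
Proof.
rewrite /offset [X in _ < X](bigD1 i) //=.
have H : \sum_(j < m | j < i) ks j <= \sum_(j < m | j != i) ks j.
  rewrite [X in X <= _]big_mkcond [X in _ <= X]big_mkcond /=.
  apply: leq_sum => j _; case: (ltnP j i) => [ji|//].
  by rewrite (_ : j != i) //; apply/eqP => E; rewrite E ltnn in ji.
rewrite -addSn; apply: leq_add; [exact: ltn_ord | exact: H].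
Qed.

Definition cyl m (ks : 'I_m -> nat) (i : 'I_m)
  : {ffun 'I_(ks i) -> 'I_(\sum_(j < m) ks j)} :=
  [ffun l => Ordinal (cyl_bound l)].

Definition axiom0 (L : pqf_alg) : Prop :=
  forall m (ks : 'I_m -> nat) (r s : forall i : 'I_m, car L (ks i)),
    le (\big[@meet L _/one L]_(i < m) sub L (cyl ks i) (r i))
       (\big[@join L _/zero L]_(i < m) sub L (cyl ks i) (s i)) ->
    exists i : 'I_m, le (r i) (s i).

Definition axiom1 (L : pqf_alg) : Prop :=
  forall n (x y z : car L n),
    join L x (join L y z) = join L (join L x y) z /\
    meet L x (meet L y z) = meet L (meet L x y) z /\
    join L x y = join L y x /\
    meet L x y = meet L y x /\
    join L x (meet L x y) = x /\
    meet L x (join L x y) = x /\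
    meet L x (join L y z) = join L (meet L x y) (meet L x z) /\
    join L x (zero L) = x /\
    meet L x (one L) = x.

Definition axiom2 (L : pqf_alg) : Prop :=
  forall n k (a : {ffun 'I_n -> 'I_k}) (x y : car L n),
    [/\ sub L a (zero L) = zero L,
        sub L a (one L) = one L,
        sub L a (join L x y) = join L (sub L a x) (sub L a y)
      & sub L a (meet L x y) = meet L (sub L a x) (sub L a y)].

Definition axiom3 (L : pqf_alg) : Prop :=
  forall k n m (a : {ffun 'I_k -> 'I_n}) (b : {ffun 'I_n -> 'I_m}) (r : car L k),
    sub L (comp_sub b a) r = sub L b (sub L a r).

Definition axiom4 (L : pqf_alg) : Prop :=
  forall n (r : car L n), sub L (id_sub n) r = r.

Definition pqf_axioms (L : pqf_alg) : Prop :=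
  [/\ axiom0 L, axiom1 L, axiom2 L, axiom3 L & axiom4 L].

(* The concrete algebra A(W): sort n is P(W^n), with W^n = 'I_n -> W and
   subsets represented as predicates. *)
Definition A (W : Type) : pqf_alg := {|
  car  := fun n => ('I_n -> W) -> Prop;
  sub  := fun n k a r => fun x : 'I_k -> W => r (fun i => x (a i));
  zero := fun n => fun _ => False;
  one  := fun n => fun _ => True;
  join := fun n r s => fun x => r x \/ s x;
  meet := fun n r s => fun x => r x /\ s x
|}.

Record subalg (L : pqf_alg) := Subalg {
  smem : forall n, car L n -> Prop;
  smem_sub : forall n k (a : {ffun 'I_n -> 'I_k}) x, smem x -> smem (sub L a x);
  smem_zero : forall n, smem (zero L (n:=n));
  smem_one : forall n, smem (one L (n:=n));
  smem_join : forall n (x y : car L n), smem x -> smem y -> smem (join L x y);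
  smem_meet : forall n (x y : car L n), smem x -> smem y -> smem (meet L x y)
}.
Arguments smem {L} S {n} x : rename.

Definition subalg_alg (L : pqf_alg) (S : subalg L) : pqf_alg := {|
  car  := fun n => {x : car L n | smem S x};
  sub  := fun n k a x => exist _ (sub L a (proj1_sig x)) (smem_sub a (proj2_sig x));
  zero := fun n => exist _ (zero L) (smem_zero S n);
  one  := fun n => exist _ (one L) (smem_one S n);
  join := fun n x y => exist _ (join L (proj1_sig x) (proj1_sig y))
                              (smem_join (proj2_sig x) (proj2_sig y));
  meet := fun n x y => exist _ (meet L (proj1_sig x) (proj1_sig y))
                              (smem_meet (proj2_sig x) (proj2_sig y))
|}.

Definition is_hom (L M : pqf_alg) (f : forall n, car L n -> car M n) : Prop :=
  [/\ forall n k (a : {ffun 'I_n -> 'I_k}) x, f k (sub L a x) = sub M a (f n x),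
      forall n, f n (zero L) = zero M,
      forall n, f n (one L) = one M,
      forall n x y, f n (join L x y) = join M (f n x) (f n y)
    & forall n x y, f n (meet L x y) = meet M (f n x) (f n y)].

Definition isomorphic (L M : pqf_alg) : Prop :=
  exists f : forall n, car L n -> car M n,
    is_hom f /\ forall n, bijective (f n).

(* Main.v *)
Require Import Defs.
From mathcomp Require Import all_boot.
From mathcomp Require Import classical_sets boolp.
Set Implicit Arguments. Unset Strict Implicit. Unset Printing Implicit Defensive.
From Stdlib Require Import ProofIrrelevance.
Section PFT.
Variables (D : Type) (le : D -> D -> Prop) (mt jn : D -> D -> D).
Hypothesis le_trans : forall a b c, le a b -> le b c -> le a c.
Hypothesis mt_l : forall a b, le (mt a b) a.
Hypothesis mt_r : forall a b, le (mt a b) b.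
Hypothesis mt_glb : forall a b c, le c a -> le c b -> le c (mt a b).
Hypothesis jn_l : forall a b, le a (jn a b).
Hypothesis jn_r : forall a b, le b (jn a b).
Hypothesis jn_lub : forall a b c, le a c -> le b c -> le (jn a b) c.
Hypothesis distr : forall a b c, le (mt a (jn b c)) (jn (mt a b) (mt a c)).

Definition is_filter (F : D -> Prop) :=
  (forall a b, F a -> le a b -> F b) /\ (forall a b, F a -> F b -> F (mt a b)).
Definition is_ideal (I : D -> Prop) :=
  (forall a b, I b -> le a b -> I a) /\ (forall a b, I a -> I b -> I (jn a b)).

Lemma pft (F I : D -> Prop) : is_filter F -> is_ideal I ->
  (forall a, F a -> I a -> False) ->
  exists P : D -> Prop, [/\ is_filter P, (forall a, F a -> P a),
     (forall a, P a -> I a -> False) & (forall a b, P (jn a b) -> P a \/ P b)].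
Proof.
move=> [Fup Fmt] [Idn Ijn] FI.
pose Q (X : D -> Prop) := is_filter (fun a => F a \/ X a) /\
   (forall a, F a \/ X a -> I a -> False).
have [A [[[Aup Amt] AI] Amax]] : exists A, Q A /\ forall B, (A `<` B)%classic -> ~ Q B.
  apply: Zorn_bigcup => C CQ Ctot; split; first split.
  - move=> a b [Fa|[X CX Xa]] ab; first by left; exact: Fup ab.
    have [[Xup _] _] := CQ X CX.
    by case: (Xup a b (or_intror Xa) ab) => [Fb|Xb]; [left|right; exists X].
  - move=> a b [Fa|[X CX Xa]] [Fb|[Y CY Yb]]; first by left; exact: Fmt.
    + have [[_ Ymt] _] := CQ Y CY.
      by case: (Ymt a b (or_introl Fa) (or_intror Yb)) => [?|?]; [left|right; exists Y].
    + have [[_ Xmt] _] := CQ X CX.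
      by case: (Xmt a b (or_intror Xa) (or_introl Fb)) => [?|?]; [left|right; exists X].
    + have [XY|YX] := Ctot X Y CX CY.
      * have [[_ Ymt] _] := CQ Y CY.
        by case: (Ymt a b (or_intror (XY _ Xa)) (or_intror Yb)) => [?|?]; [left|right; exists Y].
      * have [[_ Xmt] _] := CQ X CX.
        by case: (Xmt a b (or_intror Xa) (or_intror (YX _ Yb))) => [?|?]; [left|right; exists X].
  - move=> a [Fa|[X CX Xa]] Ia; first exact: FI Fa Ia.
    have [_ XI] := CQ X CX; exact: XI (or_intror Xa) Ia.
pose P := fun a => F a \/ A a.
have key : forall a c, P c -> ~ P a -> exists p x, [/\ P p, le (mt p a) x & I x].
  move=> a c Pc nPa.
  apply: contrapT => nex.
  pose B := fun x => exists p, P p /\ le (mt p a) x.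
  have PB : forall x, P x -> B x.
    move=> x Px.
    exists x; split; first done.
    exact: mt_l.
  have QB : Q B.
    split; first split.
    - move=> x y [Fx|[p [Pp pa]]] xy; right.
      + by exists x; split; [left|apply: le_trans (mt_l _ _) xy].
      + by exists p; split=> //; apply: le_trans pa xy.
    - move=> x y Bx By.
      have {}Bx : B x by case: Bx => // /(fun h => PB _ (or_introl h)).
      have {}By : B y by case: By => // /(fun h => PB _ (or_introl h)).
      case: Bx => p [Pp px]; case: By => p' [Pp' py]; right.
      exists (mt p p'); split; first exact: Amt.
      apply: mt_glb.
      + apply: le_trans px; apply: mt_glb; [exact: le_trans (mt_l _ _) (mt_l _ _)|exact: mt_r].
      + apply: le_trans py; apply: mt_glb; [exact: le_trans (mt_l _ _) (mt_r _ _)|exact: mt_r].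
    - move=> x Bx Ix; have {}Bx : B x by case: Bx => // /(fun h => PB _ (or_introl h)).
      case: Bx => p [Pp px]; apply: nex; by exists p, x.
  (* B is strictly bigger than A unless it is contained in P *)
  apply: (Amax B) => //; split; first by move=> x Ax; apply: PB; right.
  move=> BA; apply: nPa; right; apply: BA.
  by exists c; split=> //; exact: mt_r.
exists P; split.
- by split.
- by move=> a Fa; left.
- exact: AI.
move=> a b Pab; case: (pselect (P a)) => [?|nPa]; first by left.
case: (pselect (P b)) => [?|nPb]; first by right.
exfalso.
have [p1 [x1 [Pp1 px1 Ix1]]] := key a _ Pab nPa.
have [p2 [x2 [Pp2 px2 Ix2]]] := key b _ Pab nPb.
have Pp : P (mt (mt p1 p2) (jn a b)) by exact: Amt (Amt _ _ Pp1 Pp2) Pab.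
apply: AI Pp _; apply: Idn (Ijn _ _ Ix1 Ix2) _.
apply: le_trans (distr _ _ _) _; apply: jn_lub.
- apply: (le_trans _ (jn_l x1 x2)); apply: (le_trans _ px1); apply: mt_glb; last exact: mt_r.
  exact: le_trans (mt_l _ _) (mt_l _ _).
- apply: (le_trans _ (jn_r x1 x2)); apply: (le_trans _ px2); apply: mt_glb; last exact: mt_r.
  exact: le_trans (mt_l _ _) (mt_r _ _).
Qed.
End PFT.
Lemma split_l m n (i : 'I_m) : split (lshift n i) = inl i.
Proof. exact: (unsplitK (inl _ i)). Qed.
Lemma split_r m n (i : 'I_n) : split (rshift m i) = inr i.
Proof. exact: (unsplitK (inr _ i)). Qed.

Section Lat.
Variables (L : pqf_alg) (ax1 : axiom1 L) (n : nat).
Implicit Types x y z : car L n.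

Lemma joinA x y z : join L x (join L y z) = join L (join L x y) z.
Proof. by case: (ax1 x y z). Qed.
Lemma meetA x y z : meet L x (meet L y z) = meet L (meet L x y) z.
Proof. by case: (ax1 x y z) => _ []. Qed.
Lemma joinC x y : join L x y = join L y x.
Proof. by case: (ax1 x y x) => _ [] _ []. Qed.
Lemma meetC x y : meet L x y = meet L y x.
Proof. by case: (ax1 x y x) => _ [] _ [] _ []. Qed.
Lemma absJ x y : join L x (meet L x y) = x.
Proof. by case: (ax1 x y x) => _ [] _ [] _ [] _ []. Qed.
Lemma absM x y : meet L x (join L x y) = x.
Proof. by case: (ax1 x y x) => _ [] _ [] _ [] _ [] _ []. Qed.
Lemma distrM x y z : meet L x (join L y z) = join L (meet L x y) (meet L x z).
Proof. by case: (ax1 x y z) => _ [] _ [] _ [] _ [] _ [] _ []. Qed.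
Lemma join0 x : join L x (Defs.zero L) = x.
Proof. by case: (ax1 x x x) => _ [] _ [] _ [] _ [] _ [] _ [] _ []. Qed.
Lemma meet1 x : meet L x (Defs.one L) = x.
Proof. by case: (ax1 x x x) => _ [] _ [] _ [] _ [] _ [] _ [] _ []. Qed.

Lemma meetxx x : meet L x x = x.
Proof. by rewrite -{2}(absJ x x) absM. Qed.

Lemma leL_refl x : le x x.
Proof. by rewrite /le meetxx. Qed.
Lemma leL_trans x y z : le x y -> le y z -> le x z.
Proof. by rewrite /le => h1 h2; rewrite h1 -meetA -h2. Qed.
Lemma leL_ml x y : le (meet L x y) x.
Proof. by rewrite /le [RHS]meetC meetA meetxx. Qed.
Lemma leL_mr x y : le (meet L x y) y.
Proof. by rewrite /le -meetA meetxx. Qed.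
Lemma leL_glb x y z : le z x -> le z y -> le z (meet L x y).
Proof. by rewrite /le => h1 h2; rewrite meetA -h1. Qed.
Lemma leL_jl x y : le x (join L x y).
Proof. by rewrite /le absM. Qed.
Lemma leL_jr x y : le y (join L x y).
Proof. by rewrite joinC; exact: leL_jl. Qed.
Lemma leL_lub x y z : le x z -> le y z -> le (join L x y) z.
Proof.
rewrite /le => h1 h2.
by rewrite meetC distrM meetC -h1 meetC -h2.
Qed.
Lemma leL_distr x y z : le (meet L x (join L y z)) (join L (meet L x y) (meet L x z)).
Proof. rewrite distrM; exact: leL_refl. Qed.
Lemma leL_0 x : le (Defs.zero L) x.
Proof. rewrite /le; have -> : x = join L (Defs.zero L) x by rewrite joinC join0. by rewrite absM. Qed.
Lemma leL_1 x : le x (Defs.one L).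
Proof. by rewrite /le meet1. Qed.
Lemma leL_anti x y : le x y -> le y x -> x = y.
Proof. by rewrite /le => h1 h2; rewrite h1 meetC -h2. Qed.
End Lat.

Section Complete.
Variables (L : pqf_alg).
Hypotheses (ax0 : axiom0 L) (ax1 : axiom1 L) (ax2 : axiom2 L) (ax3 : axiom3 L) (ax4 : axiom4 L).

Lemma le_bigmeet n m (F : 'I_m -> car L n) i : le (\big[@Defs.meet L _/Defs.one L]_(i < m) F i) (F i).
Proof.
elim: m F i => [|m IH] F i; first by case: i.
rewrite big_ord_recl; case: (unliftP ord0 i) => [j ->|->].
- exact: leL_trans (leL_mr ax1 _ _) (IH _ _).
- exact: leL_ml.
Qed.

Lemma le_bigjoin n m (F : 'I_m -> car L n) i : le (F i) (\big[@Defs.join L _/Defs.zero L]_(i < m) F i).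
Proof.
elim: m F i => [|m IH] F i; first by case: i.
rewrite big_ord_recl; case: (unliftP ord0 i) => [j ->|->].
- exact: leL_trans (IH _ _) (leL_jr ax1 _ _).
- exact: leL_jl.
Qed.

Definition Req := {n : nat & {rs : car L n * car L n | ~ le rs.1 rs.2}}.
Definition Var := {j : Req & 'I_(projT1 j)}.
Definition xj (j : Req) : 'I_(projT1 j) -> Var := fun l => existT _ j l.
Arguments xj : clear implicits.
Definition rq (j : Req) : car L (projT1 j) := (proj1_sig (projT2 j)).1.
Definition sq (j : Req) : car L (projT1 j) := (proj1_sig (projT2 j)).2.
Lemma rqsq j : ~ le (rq j) (sq j).
Proof. exact: proj2_sig (projT2 j). Qed.

Record Str := MkStr {
  tv : forall k, ('I_k -> Var) -> car L k -> Prop;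
  T_meet : forall k (x : 'I_k -> Var) r s, tv x (meet L r s) <-> tv x r /\ tv x s;
  T_join : forall k (x : 'I_k -> Var) r s, tv x (join L r s) <-> tv x r \/ tv x s;
  T_one : forall k (x : 'I_k -> Var), tv x (Defs.one L);
  T_zero : forall k (x : 'I_k -> Var), ~ tv x (Defs.zero L);
  T_sub : forall n k (a : {ffun 'I_n -> 'I_k}) (x : 'I_k -> Var) r,
     tv (fun i => x (a i)) r <-> tv x (sub L a r)
}.
Arguments tv _ {k} _ _.

Lemma fmodel m (S : 'I_m -> Req) :
  (forall j : Req, inhabited {ffun 'I_(projT1 j) -> 'I_(\sum_(i < m) projT1 (S i))}) ->
  exists T : Str, forall i, tv T (xj (S i)) (rq (S i)) /\ ~ tv T (xj (S i)) (sq (S i)).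
Proof.
move=> inh.
pose ks := fun i => projT1 (S i).
pose N := \sum_(i < m) ks i.
pose M := \big[@Defs.meet L _/Defs.one L]_(i < m) sub L (cyl ks i) (rq (S i)).
pose J := \big[@Defs.join L _/Defs.zero L]_(i < m) sub L (cyl ks i) (sq (S i)).
have hF : is_filter (@le L N) (@Defs.meet L N) (fun a => le M a).
  split; first by move=> a b h1 h2; exact: leL_trans h1 h2.
  by move=> a b h1 h2; exact: leL_glb.
have hI : is_ideal (@le L N) (@Defs.join L N) (fun a => le a J).
  split; first by move=> a b h1 h2; exact: leL_trans h2 h1.
  by move=> a b h1 h2; exact: leL_lub.
have hFI : forall a, le M a -> le a J -> False.
  move=> a h1 h2; have [i] := ax0 (leL_trans ax1 h1 h2); exact: rqsq.
have [q [[qup qmt] Fq qI qpr]] := @pft (car L N) (@le L N) (@Defs.meet L N) (@Defs.join L N)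
   (@leL_trans L ax1 N) (@leL_ml L ax1 N) (@leL_mr L ax1 N) (@leL_glb L ax1 N)
   (@leL_jl L ax1 N) (@leL_jr L ax1 N) (@leL_lub L ax1 N) (@leL_distr L ax1 N)
   _ _ hF hI hFI.
have q1 : q (Defs.one L) by apply: Fq; exact: leL_1.
have q0 : ~ q (Defs.zero L) by move=> h; apply: qI h _; exact: leL_0.
have qmeet a b : q (meet L a b) <-> q a /\ q b.
  split; last by case; exact: qmt.
  by move=> h; split; apply: qup h _; [exact: leL_ml|exact: leL_mr].
have qjoin a b : q (join L a b) <-> q a \/ q b.
  split; first exact: qpr.
  by case=> h; apply: qup h _; [exact: leL_jl|exact: leL_jr].
have exd (j : Req) : exists _ : {ffun 'I_(projT1 j) -> 'I_N}, True by case: (inh j) => g; exists g.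
pose dflt (j : Req) : {ffun 'I_(projT1 j) -> 'I_N} := proj1_sig (cid (exd j)).
pose ok (j : Req) (G : {ffun 'I_(projT1 j) -> 'I_N}) :=
  q (sub L G (rq j)) /\ ~ q (sub L G (sq j)).
pose Gsel (j : Req) : {ffun 'I_(projT1 j) -> 'I_N} :=
  match pselect (exists G, ok j G) with
  | left h => proj1_sig (cid h) | right _ => dflt j end.
have GselP i : ok (S i) (Gsel (S i)).
  rewrite /Gsel; case: pselect => [h|nh]; first exact: proj2_sig (cid h).
  exfalso; apply: nh; exists (cyl ks i); split.
  - apply: Fq; exact: (le_bigmeet (fun i => sub L (cyl ks i) (rq (S i)))).
  - move=> h; apply: qI h _; exact: (le_bigjoin (fun i => sub L (cyl ks i) (sq (S i)))).
pose g (v : Var) : 'I_N := Gsel (tag v) (tagged v).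
pose tv0 k (x : 'I_k -> Var) (r : car L k) := q (sub L [ffun i => g (x i)] r).
unshelve eexists (@MkStr tv0 _ _ _ _ _).
- move=> k x r s; rewrite /tv0; case: (ax2 [ffun i => g (x i)] r s) => _ _ _ ->; exact: qmeet.
- move=> k x r s; rewrite /tv0; case: (ax2 [ffun i => g (x i)] r s) => _ _ -> _; exact: qjoin.
- move=> k x; rewrite /tv0; case: (ax2 [ffun i => g (x i)] (Defs.one L) (Defs.one L)) => _ -> _ _; exact: q1.
- move=> k x; rewrite /tv0; case: (ax2 [ffun i => g (x i)] (Defs.one L) (Defs.one L)) => -> _ _ _; exact: q0.
- move=> n k a x r; rewrite /tv0 -ax3.
  have -> : comp_sub [ffun i => g (x i)] a = [ffun i => g (x (a i))].
    by apply/ffunP => i; rewrite !ffunE.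
  by [].
move=> i /=; rewrite /tv0.
have -> : [ffun l => g (xj (S i) l)] = Gsel (S i) by apply/ffunP => l; rewrite ffunE.
exact: GselP i.
Qed.

Definition catS m1 m2 (S1 : 'I_m1 -> Req) (S2 : 'I_m2 -> Req) : 'I_(m1 + m2) -> Req :=
  fun i => match split i with inl a => S1 a | inr b => S2 b end.

Lemma fmodel' m (S : 'I_m -> Req) :
  exists T : Str, forall i, tv T (xj (S i)) (rq (S i)) /\ ~ tv T (xj (S i)) (sq (S i)).
Proof.
case: (pselect (exists j : Req, 0 < projT1 j)) => [[j0 hj0]|nj].
- pose S' := catS S (fun _ : 'I_1 => j0).
  have Npos : 0 < \sum_(i < m + 1) projT1 (S' i).
    rewrite (bigD1 (rshift m ord0)) //= /S' /catS split_r.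
    exact: leq_trans hj0 (leq_addr _ _).
  have [T HT] := @fmodel _ S' (fun j => inhabits [ffun _ => Ordinal Npos]).
  exists T => i; have := HT (lshift 1 i); by rewrite /S' /catS split_l.
- apply: fmodel => j; have hj : projT1 j = 0.
    by case: (posnP (projT1 j)) => // h; exfalso; apply: nj; exists j.
  constructor; apply: finfun => l; exfalso; have := leq_trans (ltn_ord l) (eq_leq hj); by [].
Qed.

Definition Fm := {k : nat & (('I_k -> Var) * car L k)%type}.
Definition sem (phi : Fm) (T : Str) : Prop := tv T (projT2 phi).1 (projT2 phi).2.
Definition leF (phi psi : Fm) := forall T : Str, sem phi T -> sem psi T.
Definition catV k l (x : 'I_k -> Var) (y : 'I_l -> Var) : 'I_(k + l) -> Var :=
  fun i => match split i with inl a => x a | inr b => y b end.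
Definition lsh k l : {ffun 'I_k -> 'I_(k + l)} := [ffun i => lshift l i].
Definition rsh k l : {ffun 'I_l -> 'I_(k + l)} := [ffun i => rshift k i].
Definition mtF (phi psi : Fm) : Fm :=
  existT _ (projT1 phi + projT1 psi)
    (catV (projT2 phi).1 (projT2 psi).1,
     meet L (sub L (lsh _ _) (projT2 phi).2) (sub L (rsh _ _) (projT2 psi).2)).
Definition jnF (phi psi : Fm) : Fm :=
  existT _ (projT1 phi + projT1 psi)
    (catV (projT2 phi).1 (projT2 psi).1,
     join L (sub L (lsh _ _) (projT2 phi).2) (sub L (rsh _ _) (projT2 psi).2)).

Lemma catV_l k l (x : 'I_k -> Var) (y : 'I_l -> Var) :
  (fun i => catV x y (lsh k l i)) = x.
Proof. by apply: funext => i; rewrite ffunE /catV split_l. Qed.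
Lemma catV_r k l (x : 'I_k -> Var) (y : 'I_l -> Var) :
  (fun i => catV x y (rsh k l i)) = y.
Proof. by apply: funext => i; rewrite ffunE /catV split_r. Qed.

Lemma sem_mtF phi psi T : sem (mtF phi psi) T <-> sem phi T /\ sem psi T.
Proof.
case: phi => k [x r]; case: psi => l [y s]; rewrite /sem /=.
split.
- move/T_meet => [h1 h2].
  move: (iffRL (T_sub T (lsh k l) (catV x y) r) h1) (iffRL (T_sub T (rsh k l) (catV x y) s) h2).
  by rewrite catV_l catV_r.
- move=> [h1 h2]; apply/T_meet; split.
  + apply: (iffLR (T_sub T (lsh k l) (catV x y) r)); by rewrite catV_l.
  + apply: (iffLR (T_sub T (rsh k l) (catV x y) s)); by rewrite catV_r.
Qed.

Lemma sem_jnF phi psi T : sem (jnF phi psi) T <-> sem phi T \/ sem psi T.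
Proof.
case: phi => k [x r]; case: psi => l [y s]; rewrite /sem /=.
split.
- move/T_join => [h1|h2].
  + left; move: (iffRL (T_sub T (lsh k l) (catV x y) r) h1); by rewrite catV_l.
  + right; move: (iffRL (T_sub T (rsh k l) (catV x y) s) h2); by rewrite catV_r.
- move=> [h1|h2]; apply/T_join.
  + left; apply: (iffLR (T_sub T (lsh k l) (catV x y) r)); by rewrite catV_l.
  + right; apply: (iffLR (T_sub T (rsh k l) (catV x y) s)); by rewrite catV_r.
Qed.

Lemma ord0F (i : 'I_0) : False. Proof. by case: i. Qed.
Definition S0 : 'I_0 -> Req := fun i => False_rect _ (ord0F i).

Lemma global : exists T : Str, forall n (r s : car L n), ~ le r s ->
  exists x : 'I_n -> Var, tv T x r /\ ~ tv T x s.
Proof.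
pose F0 phi := exists m (S : 'I_m -> Req),
  forall T : Str, (forall i, tv T (xj (S i)) (rq (S i))) -> sem phi T.
pose I0 phi := exists m (S : 'I_m -> Req),
  forall T : Str, sem phi T -> exists i, tv T (xj (S i)) (sq (S i)).
have hF : is_filter leF mtF F0.
  split.
  - move=> a b [m [S h]] ab; exists m, S => T hT; apply: ab; exact: h.
  - move=> a b [m1 [S1 h1]] [m2 [S2 h2]]; exists (m1 + m2), (catS S1 S2) => T hT.
    apply/sem_mtF; split.
    + apply: h1 => i; have := hT (lshift m2 i); by rewrite /catS split_l.
    + apply: h2 => i; have := hT (rshift m1 i); by rewrite /catS split_r.
have hI : is_ideal leF jnF I0.
  split.
  - move=> a b [m [S h]] ab; exists m, S => T hT; apply: h; exact: ab.
  - move=> a b [m1 [S1 h1]] [m2 [S2 h2]]; exists (m1 + m2), (catS S1 S2) => T.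
    move/sem_jnF => [ha|hb].
    + have [i hi] := h1 T ha; exists (lshift m2 i); by rewrite /catS split_l.
    + have [i hi] := h2 T hb; exists (rshift m1 i); by rewrite /catS split_r.
have hFI : forall a, F0 a -> I0 a -> False.
  move=> a [m1 [S1 h1]] [m2 [S2 h2]].
  have [T HT] := fmodel' (catS S1 S2).
  have [i hi] : exists i, tv T (xj (S2 i)) (sq (S2 i)).
    apply: h2; apply: h1 => i; have := HT (lshift m2 i); rewrite /catS split_l; by case.
  have := HT (rshift m1 i); rewrite /catS split_r; by case.
have hd : forall a b c, leF (mtF a (jnF b c)) (jnF (mtF a b) (mtF a c)).
  move=> a b c T /sem_mtF [ha /sem_jnF [hb|hc]]; apply/sem_jnF; [left|right]; exact/sem_mtF.
have [P [[Pup Pmt] FP PI Ppr]] := @pft Fm leF mtF jnF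
  (fun a b c h1 h2 T h => h2 T (h1 T h))
  (fun a b T h => proj1 (iffLR (sem_mtF a b T) h))
  (fun a b T h => proj2 (iffLR (sem_mtF a b T) h))
  (fun a b c h1 h2 T h => iffRL (sem_mtF a b T) (conj (h1 T h) (h2 T h)))
  (fun a b T h => iffRL (sem_jnF a b T) (or_introl h))
  (fun a b T h => iffRL (sem_jnF a b T) (or_intror h))
  (fun a b c h1 h2 T h => match iffLR (sem_jnF a b T) h with
     | or_introl h' => h1 T h' | or_intror h' => h2 T h' end)
  hd _ _ hF hI hFI.
pose tvP k (x : 'I_k -> Var) (r : car L k) : Prop := P (existT _ k (x, r)).
unshelve eexists (@MkStr tvP _ _ _ _ _).
- move=> k x r s; rewrite /tvP; split.
  + move=> h; split; apply: Pup h _ => T /= /T_meet []//.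
  + move=> [h1 h2]; apply: Pup (Pmt _ _ h1 h2) _ => T /sem_mtF [/= a b]; exact/T_meet.
- move=> k x r s; rewrite /tvP; split.
  + move=> h; apply: Ppr; apply: Pup h _ => T /= /T_join h; apply/sem_jnF; exact: h.
  + by move=> [h|h]; apply: Pup h _ => T /= h; apply/T_join; [left|right].
- move=> k x; rewrite /tvP; apply: FP; exists 0, S0 => T _; exact: T_one.
- move=> k x; rewrite /tvP => h; apply: (PI _ h); exists 0, S0 => T /= h'.
  by exfalso; exact: T_zero h'.
- move=> n k a x r; rewrite /tvP; split => h; apply: Pup h _ => T /= h.
  + exact: (iffLR (T_sub T a x r)).
  + exact: (iffRL (T_sub T a x r)).
move=> n r s nrs /=.
pose j : Req := existT _ n (exist _ (r, s) nrs).
exists (xj j); rewrite /tvP; split.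
- apply: FP; exists 1, (fun _ => j) => T hT; exact: hT ord0.
- move=> h; apply: (PI _ h); exists 1, (fun _ => j) => T hT; by exists ord0.
Qed.

End Complete.
Lemma cylE m (ks : 'I_m -> nat) i l : val (cyl ks i l) = l + offset ks i.
Proof. by rewrite /cyl ffunE. Qed.

Lemma offset_mono m (ks : 'I_m -> nat) (i i' : 'I_m) :
  i < i' -> offset ks i + ks i <= offset ks i'.
Proof.
move=> ii'.
have -> : offset ks i + ks i = \sum_(j < m | j <= i) ks j.
  rewrite (bigD1 i) //= addnC; congr (_ + _).
  by apply: eq_bigl => j; rewrite ltn_neqAle andbC.
rewrite /offset [X in _ <= X]big_mkcond [X in X <= _]big_mkcond /=.
apply: leq_sum => j _; case: ifP => // ji.
by rewrite (leq_ltn_trans ji ii').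
Qed.

Lemma cyl_inj m (ks : 'I_m -> nat) (i i' : 'I_m) l l' :
  cyl ks i l = cyl ks i' l' -> i = i'.
Proof.
move=> /(congr1 val); rewrite !cylE => E.
case: (ltngtP i i') => [lt|lt|/val_inj //].
- have := offset_mono ks lt; have := ltn_ord l.
  move=> h1 h2; have : l + offset ks i < offset ks i'.
    by rewrite addnC (leq_trans _ h2) // ltn_add2l.
  by rewrite E -{2}(add0n (offset ks i')) ltn_add2r.
- have := offset_mono ks lt; have := ltn_ord l'.
  move=> h1 h2; have : l' + offset ks i' < offset ks i.
    by rewrite addnC (leq_trans _ h2) // ltn_add2l.
  by rewrite -E -{2}(add0n (offset ks i)) ltn_add2r.
Qed.

Section Sound.
Variables (L : pqf_alg) (W : Type) (e : forall n, car L n -> car (A W) n).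
Hypotheses (he : is_hom (@e)) (einj : forall n, injective (@e n)).

Lemma e_sub n k (a : {ffun 'I_n -> 'I_k}) x : e (sub L a x) = fun w => e x (fun i => w (a i)).
Proof. by case: he => h _ _ _ _; rewrite h. Qed.
Lemma e_zero n : e (@Defs.zero L n) = fun _ => False.
Proof. by case: he => _ h _ _ _; rewrite h. Qed.
Lemma e_one n : e (@Defs.one L n) = fun _ => True.
Proof. by case: he => _ _ h _ _; rewrite h. Qed.
Lemma e_join n (x y : car L n) : e (join L x y) = fun w => e x w \/ e y w.
Proof. by case: he => _ _ _ h _; rewrite h. Qed.
Lemma e_meet n (x y : car L n) : e (meet L x y) = fun w => e x w /\ e y w.
Proof. by case: he => _ _ _ _ h; rewrite h. Qed.

Lemma le_e n (x y : car L n) : le x y <-> forall w, e x w -> e y w.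
Proof.
split=> [-> w|h]; first by rewrite e_meet => -[].
apply: (einj _); rewrite e_meet; apply: funext => w; apply: propext; split=> [ex|[]//].
by split=> //; exact: h.
Qed.

Lemma e_bigmeet n m (F : 'I_m -> car L n) w :
  e (\big[@Defs.meet L _/Defs.one L]_(i < m) F i) w <-> forall i, e (F i) w.
Proof.
elim: m F => [|m IH] F; first by rewrite big_ord0 e_one; split=> // _ [].
rewrite big_ord_recl /= e_meet IH; split.
- move=> [h1 h2] i; case: (unliftP ord0 i) => [j ->|->] //; exact: h2.
- move=> h; split=> // j; exact: h.
Qed.

Lemma e_bigjoin n m (F : 'I_m -> car L n) w :
  e (\big[@Defs.join L _/Defs.zero L]_(i < m) F i) w <-> exists i, e (F i) w.
Proof.
elim: m F => [|m IH] F; first by rewrite big_ord0 e_zero; split=> // -[] [].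
rewrite big_ord_recl /= e_join IH; split.
- by move=> [h|[j h]]; [exists ord0|exists (lift ord0 j)].
- move=> [i h]; case: (unliftP ord0 i) h => [j ->|->] h; last by left.
  by right; exists j.
Qed.

Ltac lat := apply: (einj _); rewrite ?(e_meet, e_join, e_zero, e_one, e_sub);
  apply: funext => w; cbv beta; apply: propext; tauto.

Lemma s_ax1 : axiom1 L.
Proof. by move=> n x y z; repeat split; lat. Qed.

Lemma s_ax2 : axiom2 L.
Proof.
by move=> n k a x y; split; lat.
Qed.

Lemma s_ax3 : axiom3 L.
Proof.
move=> k n m a b r; apply: (einj _); rewrite !e_sub; apply: funext => w.
by congr (e r _); apply: funext => i; rewrite /comp_sub ffunE.
Qed.

Lemma s_ax4 : axiom4 L.
Proof.
move=> n r; apply: (einj _); rewrite !e_sub; apply: funext => w.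
by congr (e r _); apply: funext => i; rewrite /id_sub ffunE.
Qed.

Lemma s_ax0 : axiom0 L.
Proof.
move=> m ks r s /le_e H.
case: (pselect (exists i, le (r i) (s i))) => // nex; exfalso.
have wit : forall i, exists w : 'I_(ks i) -> W, e (r i) w /\ ~ e (s i) w.
  move=> i; case: (pselect (exists w, e (r i) w /\ ~ e (s i) w)) => // nw; exfalso.
  apply: nex; exists i; apply/le_e => w rw.
  case: (pselect (e (s i) w)) => // nsw; exfalso; apply: nw; by exists w.
pose wi i := proj1_sig (cid (wit i)).
have wiP i : e (r i) (wi i) /\ ~ e (s i) (wi i) := proj2_sig (cid (wit i)).
have noW : ~ (exists x : W, True) -> 'I_(\sum_(i < m) ks i) -> False.
  move=> nW [p]; rewrite big1 // => i _.
  case: (posnP (ks i)) => // kpos; exfalso; apply: nW.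
  by exists (wi i (Ordinal kpos)).
pose d (p : 'I_(\sum_(i < m) ks i)) : W :=
  match pselect (exists x : W, True) with
  | left h => proj1_sig (cid h)
  | right h => False_rect _ (noW h p) end.
pose w (p : 'I_(\sum_(i < m) ks i)) : W :=
  match pselect (exists il : {i : 'I_m & 'I_(ks i)}, cyl ks (tag il) (tagged il) = p) with
  | left h => wi (tag (proj1_sig (cid h))) (tagged (proj1_sig (cid h)))
  | right _ => d p end.
have wE i l : w (cyl ks i l) = wi i l.
  rewrite /w; case: pselect => [h|nh]; last by exfalso; apply: nh; exists (existT _ i l).
  case: (cid h) => [[i' l'] /= E].
  have ii := cyl_inj E; subst i'.
  congr (wi i _); apply: val_inj; move: E => /(congr1 val); rewrite !cylE.
  by move/addIn.
have wfun i : (fun l => w (cyl ks i l)) = wi i by apply: funext => l; exact: wE.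
have [i] : exists i, e (sub L (cyl ks i) (s i)) w.
  apply/e_bigjoin; apply: H; apply/e_bigmeet => i.
  by rewrite e_sub wfun; case: (wiP i).
by rewrite e_sub wfun; case: (wiP i).
Qed.

Lemma sound : pqf_axioms L.
Proof. split; [exact: s_ax0|exact: s_ax1|exact: s_ax2|exact: s_ax3|exact: s_ax4]. Qed.

End Sound.

Lemma sig_eq (X : Type) (Pr : X -> Prop) (a b : {x | Pr x}) :
  proj1_sig a = proj1_sig b -> a = b.
Proof.
case: a => a pa; case: b => b pb /= E; subst b.
by rewrite (Prop_irrelevance pa pb).
Qed.

Theorem theorem3p2 (L : pqf_alg) :
  pqf_axioms L <->
  exists (W : Type) (S : subalg (A W)), isomorphic L (subalg_alg S).
Proof.
split.
- case=> ax0 ax1 ax2 ax3 ax4.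
  have [T HT] := global ax0 ax1 ax2 ax3.
  pose h n (r : car L n) : car (A (Var L)) n := fun x => tv T x r.
  have h_sub n k (a : {ffun 'I_n -> 'I_k}) r : h k (sub L a r) = sub (A (Var L)) a (h n r).
    apply: funext => x; apply: propext; rewrite /h /=; exact: iff_sym (T_sub T a x r).
  have h_zero n : h n (Defs.zero L) = Defs.zero (A (Var L)).
    apply: funext => x; apply: propext; rewrite /h /=; split=> // ; exact: T_zero.
  have h_one n : h n (Defs.one L) = Defs.one (A (Var L)).
    apply: funext => x; apply: propext; rewrite /h /=; split=> // _; exact: T_one.
  have h_join n (r s : car L n) : h n (join L r s) = join (A (Var L)) (h n r) (h n s).
    apply: funext => x; apply: propext; rewrite /h /=; exact: T_join.
  have h_meet n (r s : car L n) : h n (meet L r s) = meet (A (Var L)) (h n r) (h n s).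
    apply: funext => x; apply: propext; rewrite /h /=; exact: T_meet.
  have h_inj n : injective (h n).
    move=> r s E.
    have lrs : forall r s : car L n, h n r = h n s -> le r s.
      move=> r' s' E'; case: (pselect (le r' s')) => // nle; exfalso.
      have [x [hr hs]] := HT n r' s' nle; apply: hs.
      by move: hr; rewrite -/(h n r' x) E'.
    by apply: (leL_anti ax1); apply: lrs.
  have c_sub : forall n k (a : {ffun 'I_n -> 'I_k}) (X : car (A (Var L)) n),
      (exists r, h n r = X) -> exists r, h k r = sub (A (Var L)) a X.
    by move=> n k a X [r E]; exists (sub L a r); rewrite h_sub E.
  have c_join : forall n (X Y : car (A (Var L)) n), (exists r, h n r = X) ->
      (exists r, h n r = Y) -> exists r, h n r = join (A (Var L)) X Y.
    by move=> n X Y [r E] [s E']; exists (join L r s); rewrite h_join E E'.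
  have c_meet : forall n (X Y : car (A (Var L)) n), (exists r, h n r = X) ->
      (exists r, h n r = Y) -> exists r, h n r = meet (A (Var L)) X Y.
    by move=> n X Y [r E] [s E']; exists (meet L r s); rewrite h_meet E E'.
  pose S := @Subalg (A (Var L)) (fun n X => exists r, h n r = X) c_sub
    (fun n => ex_intro _ (Defs.zero L) (h_zero n))
    (fun n => ex_intro _ (Defs.one L) (h_one n)) c_join c_meet.
  exists (Var L), S.
  pose f n (r : car L n) : car (subalg_alg S) n := exist _ (h n r) (ex_intro _ r erefl).
  exists f; split.
  + split.
    * by move=> n k a x; apply: sig_eq; rewrite /= h_sub.
    * by move=> n; apply: sig_eq; rewrite /= h_zero.
    * by move=> n; apply: sig_eq; rewrite /= h_one.
    * by move=> n x y; apply: sig_eq; rewrite /= h_join.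
    * by move=> n x y; apply: sig_eq; rewrite /= h_meet.
  + move=> n.
    pose g (X : car (subalg_alg S) n) : car L n := proj1_sig (cid (proj2_sig X)).
    exists g.
    * move=> r; apply: (h_inj n); rewrite /g /=.
      exact: (proj2_sig (cid (ex_intro (fun r0 => h n r0 = h n r) r erefl))).
    * move=> X; apply: sig_eq; rewrite /g /=.
      exact: (proj2_sig (cid (proj2_sig X))).
- move=> [W [S [f [hf hb]]]].
  pose e n (x : car L n) : car (A W) n := proj1_sig (f n x).
  apply: (@sound L W e).
  + case: hf => h1 h2 h3 h4 h5; split.
    * by move=> n k a x; rewrite /e h1.
    * by move=> n; rewrite /e h2.
    * by move=> n; rewrite /e h3.
    * by move=> n x y; rewrite /e h4.
    * by move=> n x y; rewrite /e h5.
  + move=> n x y E; apply: (bij_inj (hb n)); exact: sig_eq.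
Qed.
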